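(* Let $a,b>0$ with $a+b\leq 1$, and let $c\in\mathbb{R}$. Define $$f_{a,b,c}(x)=\frac{{}_2F_1(a,b;a+b;x)}{c-\log(1-x)}.$$ Define on $[0,1)$ the functions $$h(x)=\frac{(ab)^2}{(a+b)(a+b+1)}(1-x)\,{}_2F_1(a+1,b+1;a+b+2;x)+\frac{ab}{a+b}\,{}_2F_1(a,b;a+b+1;x),$$ $$g(x)=-\Big(\frac{2ab}{a+b}\,{}_2F_1(a,b;a+b+1;x)+{}_2F_1(a,b;a+b;x)\Big),\qquad \Delta(x)=g(x)^2-8h(x)\,{}_2F_1(a,b;a+b;x),$$ $$\omega_\pm(x)=\frac{-g(x)\pm\sqrt{\Delta(x)}}{2h(x)},\qquad \varphi_\pm(x)=\log(1-x)+\omega_\pm(x),$$ and set $\alpha_0=\max_{x\in[0,1)}\varphi_+(x)$, $\delta_-=\max_{x\in[0,1)}\varphi_-(x)$, $\delta_+=\min_{x\in[0,1)}\varphi_+(x)$. Then $f_{a,b,c}$ is convex on $[0,1)$ if and only if $c\geq\alpha_0$, and $f_{a,b,c}$ is concave on $[0,1)$ if and only if $c\in[\delta_-,\delta_+]$.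
   Context: ${}_2F_1(a,b;c;x)=\sum_{n\geq0}\frac{(a)_n(b)_n}{(c)_n}\frac{x^n}{n!}$ is the Gauss hypergeometric function, with $(a)_n=\Gamma(a+n)/\Gamma(a)$. *)

(* Defs.v *)
From Stdlib Require Import Reals.
From Coquelicot Require Import Coquelicot.
Open Scope R_scope.

Fixpoint poch (a : R) (n : nat) : R :=
  match n with
  | O => 1
  | S k => poch a k * (a + INR k)
  end.

Definition hyp2F1_term (a b c x : R) (n : nat) : R :=
  poch a n * poch b n / poch c n * x ^ n / INR (Factorial.fact n).

Definition hyp2F1 (a b c x : R) : R := Series (hyp2F1_term a b c x).

Definition f_abc (a b c x : R) : R :=
  hyp2F1 a b (a + b) x / (c - ln (1 - x)).

Definition h_ab (a b x : R) : R :=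
  (a * b) ^ 2 / ((a + b) * (a + b + 1)) * (1 - x) * hyp2F1 (a + 1) (b + 1) (a + b + 2) x
  + a * b / (a + b) * hyp2F1 a b (a + b + 1) x.

Definition g_ab (a b x : R) : R :=
  - (2 * a * b / (a + b) * hyp2F1 a b (a + b + 1) x + hyp2F1 a b (a + b) x).

Definition Delta_ab (a b x : R) : R :=
  g_ab a b x ^ 2 - 8 * h_ab a b x * hyp2F1 a b (a + b) x.

Definition omega_plus (a b x : R) : R :=
  (- g_ab a b x + sqrt (Delta_ab a b x)) / (2 * h_ab a b x).
Definition omega_minus (a b x : R) : R :=
  (- g_ab a b x - sqrt (Delta_ab a b x)) / (2 * h_ab a b x).

Definition phi_plus (a b x : R) : R := ln (1 - x) + omega_plus a b x.
Definition phi_minus (a b x : R) : R := ln (1 - x) + omega_minus a b x.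

(* sup / inf over [0,1) (equal to the max / min whenever attained) *)
Definition sup01 (F : R -> R) : Rbar := Lub_Rbar (fun y => exists x, 0 <= x < 1 /\ y = F x).
Definition inf01 (F : R -> R) : Rbar := Glb_Rbar (fun y => exists x, 0 <= x < 1 /\ y = F x).

Definition alpha0 (a b : R) : Rbar := sup01 (phi_plus a b).
Definition delta_minus (a b : R) : Rbar := sup01 (phi_minus a b).
Definition delta_plus (a b : R) : Rbar := inf01 (phi_plus a b).

Definition defined01 (c : R) : Prop :=
  forall x, 0 <= x < 1 -> c - ln (1 - x) <> 0.

Definition convex01 (f : R -> R) : Prop :=
  forall x y t, 0 <= x < 1 -> 0 <= y < 1 -> 0 <= t <= 1 ->
    f (t * x + (1 - t) * y) <= t * f x + (1 - t) * f y.

Definition concave01 (f : R -> R) : Prop :=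
  forall x y t, 0 <= x < 1 -> 0 <= y < 1 -> 0 <= t <= 1 ->
    t * f x + (1 - t) * f y <= f (t * x + (1 - t) * y).

(* Main.v *)
Require Import Defs.
From Stdlib Require Import Reals Lra Lia Psatz.
From Coquelicot Require Import Coquelicot.
Open Scope R_scope.

Definition coef (a b c : R) (n : nat) : R :=
  poch a n * poch b n / poch c n / INR (Factorial.fact n).

Lemma hyp_PS a b c x : hyp2F1 a b c x = PSeries (coef a b c) x.
Proof.
  unfold hyp2F1, PSeries. apply Series_ext. intro n.
  unfold hyp2F1_term, coef. unfold Rdiv. ring.
Qed.

Lemma poch_pos a n : 0 < a -> 0 < poch a n.
Proof.
  intro Ha. induction n as [|n IH]; simpl. lra.
  apply Rmult_lt_0_compat; auto. pose proof (pos_INR n); lra.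
Qed.

Lemma poch_shift a n : poch a (S n) = a * poch (a + 1) n.
Proof.
  induction n as [|n IH].
  - simpl. ring.
  - change (poch a (S (S n))) with (poch a (S n) * (a + INR (S n))).
    rewrite IH. cbn [poch]. rewrite S_INR. ring.
Qed.

Lemma fact_pos n : 0 < INR (Factorial.fact n).
Proof. apply lt_0_INR. apply Factorial.lt_O_fact. Qed.

Lemma coef_pos a b c n : 0 < a -> 0 < b -> 0 < c -> 0 < coef a b c n.
Proof.
  intros. unfold coef, Rdiv.
  pose proof (poch_pos a n H). pose proof (poch_pos b n H0).
  pose proof (poch_pos c n H1). pose proof (fact_pos n).
  apply Rmult_lt_0_compat; [apply Rmult_lt_0_compat|]; [apply Rmult_lt_0_compat| |]; auto;
  apply Rinv_0_lt_compat; auto.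
Qed.

Lemma coef_S a b c n : 0 < c ->
  coef a b c (S n) = coef a b c n * ((a + INR n) * (b + INR n) / ((c + INR n) * INR (S n))).
Proof.
  intro Hc. unfold coef. simpl poch.
  change (Factorial.fact (S n)) with (S n * Factorial.fact n)%nat; rewrite mult_INR.
  pose proof (poch_pos c n Hc). pose proof (fact_pos n). pose proof (pos_INR n).
  rewrite S_INR. field. repeat split; lra.
Qed.

Lemma lim_frac (a c : R) : 0 < c -> is_lim_seq (fun n => (a + INR n) / (c + INR n)) 1.
Proof.
  intro Hc.
  assert (H1 : is_lim_seq (fun n => c + INR n) p_infty).
  { eapply is_lim_seq_plus. apply is_lim_seq_const. apply is_lim_seq_INR. simpl. constructor. }
  assert (H2 : is_lim_seq (fun n => / (c + INR n)) 0).
  { replace (Finite 0) with (Rbar_inv p_infty) by reflexivity.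
    apply is_lim_seq_inv. exact H1. discriminate. }
  apply is_lim_seq_ext with (fun n => 1 + (a - c) * / (c + INR n)).
  { intro n. pose proof (pos_INR n). field. lra. }
  replace (Finite 1) with (Finite (1 + (a - c) * 0)) by (f_equal; ring).
  apply is_lim_seq_plus'. apply is_lim_seq_const.
  apply is_lim_seq_mult'. apply is_lim_seq_const. exact H2.
Qed.

Lemma radius_coef a b c : 0 < a -> 0 < b -> 0 < c -> CV_radius (coef a b c) = 1.
Proof.
  intros Ha Hb Hc.
  replace (Finite 1) with (Finite (/ 1)) by (f_equal; field).
  apply CV_radius_finite_DAlembert.
  - intro n. pose proof (coef_pos a b c n Ha Hb Hc). lra.
  - lra.
  - apply is_lim_seq_ext with (fun n => ((a + INR n) / (1 + INR n)) * ((b + INR n) / (c + INR n))).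
    + intro n. rewrite coef_S by lra. pose proof (coef_pos a b c n Ha Hb Hc).
      pose proof (pos_INR n). rewrite S_INR.
      assert (HX : 0 < (a + INR n) * (b + INR n) / ((c + INR n) * (INR n + 1))).
      { apply Rdiv_lt_0_compat; apply Rmult_lt_0_compat; lra. }
      replace (coef a b c n * ((a + INR n) * (b + INR n) / ((c + INR n) * (INR n + 1))) / coef a b c n)
        with ((a + INR n) * (b + INR n) / ((c + INR n) * (INR n + 1))) by (field; repeat split; lra).
      rewrite Rabs_pos_eq by lra. field. repeat split; lra.
    + replace (Finite 1) with (Finite (1 * 1)) by (f_equal; ring).
      apply is_lim_seq_mult'; apply lim_frac; lra.
Qed.

Lemma coef_0 a b c : coef a b c 0 = 1.
Proof. unfold coef. simpl. field. Qed.

Lemma deriv_coef a b c n : 0 < c ->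
  PS_derive (coef a b c) n = a * b / c * coef (a + 1) (b + 1) (c + 1) n.
Proof.
  intro Hc. unfold PS_derive, coef. rewrite !poch_shift.
  change (Factorial.fact (S n)) with (S n * Factorial.fact n)%nat; rewrite mult_INR.
  pose proof (poch_pos (c+1) n ltac:(lra)). pose proof (fact_pos n).
  pose proof (lt_0_INR (S n) ltac:(lia)).
  field. repeat split; lra.
Qed.

Lemma inside x : Rabs x < 1 -> forall a b c, 0 < a -> 0 < b -> 0 < c ->
  Rbar_lt (Rabs x) (CV_radius (coef a b c)).
Proof. intros. rewrite radius_coef; auto. Qed.

Lemma ex_ps a b c x : 0 < a -> 0 < b -> 0 < c -> Rabs x < 1 -> ex_pseries (coef a b c) x.
Proof. intros. apply CV_radius_inside. apply inside; auto. Qed.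

Lemma is_derive_hyp a b c x : 0 < a -> 0 < b -> 0 < c -> Rabs x < 1 ->
  is_derive (PSeries (coef a b c)) x (a * b / c * PSeries (coef (a+1) (b+1) (c+1)) x).
Proof.
  intros Ha Hb Hc Hx.
  replace (a * b / c * PSeries (coef (a+1) (b+1) (c+1)) x)
    with (PSeries (PS_derive (coef a b c)) x).
  - apply is_derive_PSeries. apply inside; auto.
  - rewrite <- PSeries_scal. apply PSeries_ext. intro n. rewrite deriv_coef by auto. reflexivity.
Qed.

Lemma I2 a b x : 0 < a -> 0 < b -> Rabs x < 1 ->
  (1 - x) * PSeries (coef (a+1) (b+1) (a+b+1)) x = PSeries (coef a b (a+b+1)) x.
Proof.
  intros Ha Hb Hx.
  set (D := coef (a+1) (b+1) (a+b+1)).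
  assert (HD : ex_pseries D x) by (apply ex_ps; auto; lra).
  replace ((1 - x) * PSeries D x) with (PSeries D x - x * PSeries D x) by ring.
  rewrite <- PSeries_incr_1. rewrite <- PSeries_minus; auto.
  2:{ apply ex_pseries_incr_1. auto. }
  apply PSeries_ext. intro n. unfold PS_minus, PS_incr_1, plus, opp; simpl.
  destruct n as [|k].
  - unfold D. rewrite !coef_0. unfold zero; simpl. ring.
  - match goal with |- ?x = ?y => change (@eq R x y) end.
    unfold D. rewrite (coef_S (a+1)) by lra. unfold coef. rewrite (poch_shift a k), (poch_shift b k).
    change (Factorial.fact (S k)) with (S k * Factorial.fact k)%nat; rewrite mult_INR.
    cbn [poch].
    pose proof (poch_pos (a+b+1) k ltac:(lra)). pose proof (fact_pos k).
    pose proof (pos_INR k). rewrite S_INR.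
    field. repeat split; lra.
Qed.

Lemma I4 a b x : 0 < a -> 0 < b -> Rabs x < 1 ->
  x * (a * b / (a + b + 1) * PSeries (coef (a+1) (b+1) (a+b+2)) x)
  = (a + b) * (PSeries (coef a b (a+b)) x - PSeries (coef a b (a+b+1)) x).
Proof.
  intros Ha Hb Hx.
  replace (a * b / (a + b + 1) * PSeries (coef (a+1) (b+1) (a+b+2)) x)
    with (PSeries (PS_derive (coef a b (a+b+1))) x).
  2:{ rewrite <- PSeries_scal. apply PSeries_ext. intro n. rewrite deriv_coef by lra.
      replace (a + b + 1 + 1) with (a + b + 2) by ring. reflexivity. }
  rewrite <- PSeries_incr_1. rewrite <- PSeries_minus.
  2,3: apply ex_ps; auto; lra.
  rewrite <- PSeries_scal. apply PSeries_ext. intro n.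
  unfold PS_scal, PS_minus, PS_incr_1, plus, opp, scal; simpl.
  match goal with |- ?x = ?y => change (@eq R x y) end.
  destruct n as [|k].
  - rewrite !coef_0. unfold zero, mult; simpl. ring.
  - unfold PS_derive. rewrite (S_INR k). unfold mult; simpl. unfold coef.
    rewrite (poch_shift (a+b) k).
    cbn [poch].
    change (Factorial.fact (S k)) with (S k * Factorial.fact k)%nat; rewrite mult_INR.
    pose proof (poch_pos (a+b+1) k ltac:(lra)). pose proof (fact_pos k).
    pose proof (pos_INR k). rewrite !S_INR.
    field. repeat split; lra.
Qed.

Lemma hyp_at0 a b c : hyp2F1 a b c 0 = 1.
Proof. rewrite hyp_PS, PSeries_0. apply coef_0. Qed.

Lemma cont_hyp a b c x : 0 < a -> 0 < b -> 0 < c -> Rabs x < 1 ->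
  continuity_pt (fun y => hyp2F1 a b c y) x.
Proof.
  intros. apply continuity_pt_ext with (PSeries (coef a b c)).
  { intro; rewrite hyp_PS; reflexivity. }
  apply derivable_continuous_pt.
  exists (a * b / c * PSeries (coef (a+1) (b+1) (c+1)) x).
  apply is_derive_Reals. apply is_derive_hyp; auto.
Qed.

Lemma hyp_ge1 a b c x : 0 < a -> 0 < b -> 0 < c -> 0 <= x < 1 -> 1 <= hyp2F1 a b c x.
Proof.
  intros Ha Hb Hc Hx.
  rewrite hyp_PS. unfold PSeries.
  assert (He : ex_series (fun k => coef a b c k * x ^ k)).
  { apply ex_pseries_R. apply ex_ps; auto. rewrite Rabs_pos_eq; lra. }
  rewrite Series_incr_1 by exact He.
  rewrite coef_0, pow_O.
  assert (0 <= Series (fun k => coef a b c (S k) * x ^ (S k))).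
  { assert (Z : Series (fun _ : nat => 0) = 0).
    { rewrite (Series_ext _ (fun n : nat => 0 * 0)) by (intro; ring).
      rewrite Series_scal_l. ring. }
    rewrite <- Z. apply Series_le.
    - intro n. split. lra. apply Rmult_le_pos. apply Rlt_le, coef_pos; auto.
      apply pow_le. lra.
    - exact (proj1 (ex_series_incr_1 (fun k => coef a b c k * x ^ k)) He). }
  lra.
Qed.

Lemma poch_le s n : 0 < s -> poch s n <= poch (s + 1) n.
Proof.
  intro Hs. induction n as [|n IH]; simpl. lra.
  pose proof (poch_pos s n Hs). pose proof (pos_INR n).
  apply Rmult_le_compat; lra.
Qed.

Lemma B_le_A a b x : 0 < a -> 0 < b -> 0 <= x < 1 ->
  hyp2F1 a b (a + b + 1) x <= hyp2F1 a b (a + b) x.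
Proof.
  intros Ha Hb Hx. rewrite !hyp_PS. unfold PSeries.
  apply Series_le.
  - intro n. split.
    + apply Rmult_le_pos. apply Rlt_le, coef_pos; auto; lra. apply pow_le; lra.
    + apply Rmult_le_compat_r. apply pow_le; lra.
      unfold coef, Rdiv.
      pose proof (poch_pos a n Ha). pose proof (poch_pos b n Hb).
      pose proof (poch_pos (a+b) n ltac:(lra)). pose proof (fact_pos n).
      pose proof (poch_le (a+b) n ltac:(lra)).
      apply Rmult_le_compat_r. apply Rlt_le, Rinv_0_lt_compat; auto.
      apply Rmult_le_compat_l. apply Rlt_le, Rmult_lt_0_compat; auto.
      apply Rinv_le_contravar; auto.
  - apply ex_pseries_R. apply ex_ps; auto; try lra. rewrite Rabs_pos_eq; lra.
Qed.

Lemma dA a b x : 0 < a -> 0 < b -> Rabs x < 1 ->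
  is_derive (fun y => hyp2F1 a b (a+b) y) x
    (a * b / (a + b) * hyp2F1 a b (a+b+1) x / (1 - x)).
Proof.
  intros Ha Hb Hx.
  apply is_derive_ext with (PSeries (coef a b (a+b))).
  { intro; rewrite hyp_PS; reflexivity. }
  assert (Hx1 : x < 1) by (apply Rabs_lt_between in Hx; lra).
  replace (a * b / (a + b) * hyp2F1 a b (a+b+1) x / (1 - x))
    with (a * b / (a + b) * PSeries (coef (a+1) (b+1) (a+b+1)) x).
  - apply is_derive_hyp; auto; lra.
  - rewrite hyp_PS. rewrite <- (I2 a b x) by auto. field. split; lra.
Qed.

Lemma dB a b x : 0 < a -> 0 < b -> Rabs x < 1 ->
  is_derive (fun y => hyp2F1 a b (a+b+1) y) x
    (a * b / (a + b + 1) * hyp2F1 (a+1) (b+1) (a+b+2) x).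
Proof.
  intros Ha Hb Hx.
  apply is_derive_ext with (PSeries (coef a b (a+b+1))).
  { intro; rewrite hyp_PS; reflexivity. }
  rewrite hyp_PS. replace (a + b + 2) with (a + b + 1 + 1) by ring.
  apply is_derive_hyp; auto; lra.
Qed.

Lemma I4h a b x : 0 < a -> 0 < b -> Rabs x < 1 ->
  x * (a * b / (a + b + 1) * hyp2F1 (a+1) (b+1) (a+b+2) x)
  = (a + b) * (hyp2F1 a b (a+b) x - hyp2F1 a b (a+b+1) x).
Proof. intros. rewrite !hyp_PS. apply I4; auto. Qed.

Definition Rr a b x := hyp2F1 a b (a+b+1) x / hyp2F1 a b (a+b) x.
Definition Tf a b x := x * (1 - 2 * (a*b/(a+b)) * Rr a b x)^2 - 8*a*b*(1-x)*(1 - Rr a b x).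

Lemma dB' a b x : 0 < a -> 0 < b -> 0 < x < 1 ->
  is_derive (fun y => hyp2F1 a b (a+b+1) y) x
    ((a + b) * (hyp2F1 a b (a+b) x - hyp2F1 a b (a+b+1) x) / x).
Proof.
  intros Ha Hb Hx.
  assert (Hx' : Rabs x < 1) by (rewrite Rabs_pos_eq; lra).
  rewrite <- (I4h a b x) by auto.
  replace (x * (a * b / (a + b + 1) * hyp2F1 (a + 1) (b + 1) (a + b + 2) x) / x)
    with (a * b / (a + b + 1) * hyp2F1 (a + 1) (b + 1) (a + b + 2) x) by (field; lra).
  apply dB; auto.
Qed.

Lemma rhs_pos s p x r : 0 < s <= 1 -> 0 < p <= s / 4 -> 0 < x < 1 -> 0 < r <= 1 ->
  0 < (1+s)*(1-2*p*r)^2 + 4*p*s*(1-r)*(1+2*p*r) + 4*x*p^2*(1-2*p*r)*r^2/(1-x) - 8*p^2*s*r^2.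
Proof.
  intros Hs Hp Hx Hr.
  assert (Ht : 0 < p * r <= s / 4).
  { split. nra. nra. }
  assert (H1 : 0 <= (1+s)*(1-2*p*r)^2 - 8*p^2*s*r^2).
  { assert (E : (1+s)*(1-2*p*r)^2 - 8*p^2*s*r^2 =
      (s/4 - p*r) * (4*(1+s) - 4*(1-s)*(p*r + s/4)) + (1-s)*(1+s+s^2/4)) by field.
    rewrite E.
    assert (0 <= (1-s)*(p*r + s/4)) by nra.
    assert (0 <= (1-s)*(1+s+s^2/4)) by nra.
    assert (0 <= (s/4 - p*r) * (4*(1+s) - 4*(1-s)*(p*r + s/4))).
    { apply Rmult_le_pos; nra. }
    lra. }
  assert (H2 : 0 <= 4*p*s*(1-r)*(1+2*p*r)).
  { apply Rmult_le_pos. apply Rmult_le_pos. nra. lra. nra. }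
  assert (H3 : 0 < 4*x*p^2*(1-2*p*r)*r^2/(1-x)).
  { apply Rdiv_lt_0_compat; [|lra].
    assert (0 < 1 - 2*p*r) by nra.
    assert (0 < p^2) by nra. assert (0 < r^2) by nra.
    repeat apply Rmult_lt_0_compat; lra. }
  lra.
Qed.

Lemma dT a b x : 0 < a -> 0 < b -> 0 < x < 1 ->
  exists l, is_derive (Tf a b) x l /\
   x * l + (a+b) * Tf a b x =
   x * ((1+(a+b))*(1-2*(a*b/(a+b))*Rr a b x)^2
     + 4*(a*b/(a+b))*(a+b)*(1-Rr a b x)*(1+2*(a*b/(a+b))*Rr a b x)
     + 4*x*(a*b/(a+b))^2*(1-2*(a*b/(a+b))*Rr a b x)*(Rr a b x)^2/(1-x)
     - 8*(a*b/(a+b))^2*(a+b)*(Rr a b x)^2).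
Proof.
  intros Ha Hb Hx.
  assert (Hx' : Rabs x < 1) by (rewrite Rabs_pos_eq; lra).
  pose proof (hyp_ge1 a b (a+b) x Ha Hb ltac:(lra) ltac:(lra)) as HA.
  pose proof (hyp_ge1 a b (a+b+1) x Ha Hb ltac:(lra) ltac:(lra)) as HB.
  pose proof (dA a b x Ha Hb Hx') as DA.
  pose proof (dB' a b x Ha Hb Hx) as DB.
  unfold Tf, Rr.
  eexists. split.
  - auto_derive.
    + repeat split; try (eexists; eassumption); lra.
    + reflexivity.
  - replace (Derive (fun x : R => hyp2F1 a b (a + b) x) x) with
      (a * b / (a + b) * hyp2F1 a b (a+b+1) x / (1 - x)) by (symmetry; apply is_derive_unique; exact DA).
    replace (Derive (fun x : R => hyp2F1 a b (a + b + 1) x) x) with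
      ((a + b) * (hyp2F1 a b (a+b) x - hyp2F1 a b (a+b+1) x) / x) by (symmetry; apply is_derive_unique; exact DB).
    set (A := hyp2F1 a b (a+b) x) in *. set (B := hyp2F1 a b (a+b+1) x) in *.
    field. repeat split; lra.
Qed.

Lemma min_deriv f m l : is_derive f m l -> 0 < m ->
  (forall y, 0 <= y <= m -> f m <= f y) -> l <= 0.
Proof.
  intros Hd Hm Hmin.
  apply is_derive_Reals in Hd.
  destruct (Rle_or_lt l 0) as [H|H]; [exact H|exfalso].
  destruct (Hd (l/2) ltac:(lra)) as [d Hdel].
  set (h := - Rmin (d/2) (m/2)).
  assert (Hd0 := cond_pos d).
  assert (Hh1 : h < 0) by (unfold h; apply Ropp_lt_gt_0_contravar, Rmin_pos; lra).
  assert (Hh2 : - (m/2) <= h) by (unfold h; pose proof (Rmin_r (d/2) (m/2)); lra).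
  assert (Hh3 : - (d/2) <= h) by (unfold h; pose proof (Rmin_l (d/2) (m/2)); lra).
  specialize (Hdel h ltac:(lra) ltac:(rewrite Rabs_left; lra)).
  specialize (Hmin (m + h) ltac:(lra)).
  apply Rabs_lt_between in Hdel.
  assert (Hq : (f (m + h) - f m) / h <= 0).
  { unfold Rdiv. replace ((f (m + h) - f m) * / h) with (- ((f (m + h) - f m) * / (- h))) by (field; lra).
    assert (0 <= (f (m + h) - f m) * / (- h)).
    { apply Rmult_le_pos. lra. apply Rlt_le, Rinv_0_lt_compat. lra. }
    lra. }
  lra.
Qed.

Lemma exd_hyp a b c x : 0 < a -> 0 < b -> 0 < c -> Rabs x < 1 ->
  ex_derive (fun y => hyp2F1 a b c y) x.
Proof.
  intros. eexists. apply is_derive_ext with (PSeries (coef a b c)).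
  { intro; rewrite hyp_PS; reflexivity. }
  apply is_derive_hyp; auto.
Qed.

Lemma cont_T a b x : 0 < a -> 0 < b -> 0 <= x < 1 -> continuity_pt (Tf a b) x.
Proof.
  intros Ha Hb Hx.
  assert (Hx' : Rabs x < 1) by (rewrite Rabs_pos_eq; lra).
  pose proof (hyp_ge1 a b (a+b) x Ha Hb ltac:(lra) Hx) as HA.
  apply (proj2 (continuity_pt_filterlim _ _)). apply (@ex_derive_continuous R_AbsRing R_NormedModule (Tf a b) x).
  unfold Tf, Rr. auto_derive.
  repeat split; try (apply exd_hyp; auto; lra); lra.
Qed.

Lemma T0 a b : 0 < a -> 0 < b -> Tf a b 0 = 0.
Proof. intros. unfold Tf, Rr. rewrite !hyp_at0. field. lra. Qed.

Lemma R_bounds a b x : 0 < a -> 0 < b -> 0 <= x < 1 -> 0 < Rr a b x <= 1.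
Proof.
  intros Ha Hb Hx. unfold Rr.
  pose proof (hyp_ge1 a b (a+b) x Ha Hb ltac:(lra) Hx).
  pose proof (hyp_ge1 a b (a+b+1) x Ha Hb ltac:(lra) Hx).
  pose proof (B_le_A a b x Ha Hb Hx).
  split. apply Rdiv_lt_0_compat; lra.
  apply (Rmult_le_reg_r (hyp2F1 a b (a + b) x)). lra.
  unfold Rdiv. rewrite Rmult_assoc, Rinv_l by lra. lra.
Qed.

Lemma T_pos a b x : 0 < a -> 0 < b -> a + b <= 1 -> 0 < x < 1 -> 0 < Tf a b x.
Proof.
  intros Ha Hb Hab Hx.
  destruct (Rlt_or_le 0 (Tf a b x)) as [H|H]; [exact H|exfalso].
  destruct (continuity_ab_min (Tf a b) 0 x ltac:(lra)) as [m [Hm1 Hm2]].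
  { intros y Hy. apply cont_T; auto; lra. }
  assert (Hex : exists m', 0 < m' <= x /\ Tf a b m' <= 0 /\
            forall y, 0 <= y <= m' -> Tf a b m' <= Tf a b y).
  { destruct (Req_dec m 0) as [E|E].
    - subst m. rewrite T0 in Hm1 by auto.
      assert (Tf a b x = 0) by (specialize (Hm1 x ltac:(lra)); lra).
      exists x. split. lra. split. lra. intros y Hy. rewrite H0.
      apply Hm1; lra.
    - exists m. split. lra. split. specialize (Hm1 x ltac:(lra)). lra.
      intros y Hy. apply Hm1. lra. }
  destruct Hex as [m' [Hm'1 [Hm'2 Hm'3]]].
  destruct (dT a b m' Ha Hb ltac:(lra)) as [l [Hl1 Hl2]].
  pose proof (min_deriv _ _ _ Hl1 ltac:(lra) Hm'3) as Hl.
  pose proof (R_bounds a b m' Ha Hb ltac:(lra)) as Hr.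
  assert (Hp : 0 < a*b/(a+b) <= (a+b)/4).
  { split. apply Rdiv_lt_0_compat; nra.
    apply (Rmult_le_reg_r (a+b)). lra.
    replace (a*b/(a+b)*(a+b)) with (a*b) by (field; lra).
    pose proof (pow2_ge_0 (a - b)). lra. }
  pose proof (rhs_pos (a+b) (a*b/(a+b)) m' (Rr a b m') ltac:(lra) Hp ltac:(lra) Hr) as Hrhs.
  assert (0 < m' * l + (a+b) * Tf a b m').
  { rewrite Hl2. apply Rmult_lt_0_compat; lra. }
  assert (m' * l <= 0) by nra.
  nra.
Qed.

Lemma Delta_T a b x : 0 < a -> 0 < b -> 0 < x < 1 ->
  Delta_ab a b x = (hyp2F1 a b (a+b) x)^2 * Tf a b x / x.
Proof.
  intros Ha Hb Hx.
  assert (Hx' : Rabs x < 1) by (rewrite Rabs_pos_eq; lra).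
  pose proof (I4h a b x Ha Hb Hx') as E.
  pose proof (hyp_ge1 a b (a+b) x Ha Hb ltac:(lra) ltac:(lra)) as HA.
  assert (EC : hyp2F1 (a+1) (b+1) (a+b+2) x =
     (a+b)*(a+b+1)*(hyp2F1 a b (a+b) x - hyp2F1 a b (a+b+1) x) / (a*b*x)).
  { replace ((a+b)*(a+b+1)*(hyp2F1 a b (a+b) x - hyp2F1 a b (a+b+1) x))
      with ((a+b+1) * ((a+b)*(hyp2F1 a b (a+b) x - hyp2F1 a b (a+b+1) x))) by ring.
    rewrite <- E. field. repeat split; lra. }
  unfold Delta_ab, g_ab, h_ab, Tf, Rr. rewrite EC.
  set (A := hyp2F1 a b (a+b) x) in *. set (B := hyp2F1 a b (a+b+1) x) in *.
  field. repeat split; lra.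
Qed.

Lemma Delta_pos a b x : 0 < a -> 0 < b -> a + b <= 1 -> 0 < x < 1 -> 0 < Delta_ab a b x.
Proof.
  intros. rewrite Delta_T by auto.
  pose proof (hyp_ge1 a b (a+b) x H H0 ltac:(lra) ltac:(lra)) as HA.
  pose proof (T_pos a b x H H0 H1 H2).
  apply Rdiv_lt_0_compat; [|lra]. apply Rmult_lt_0_compat; nra.
Qed.

Lemma Delta0 a b : 0 < a -> 0 < b -> a + b <= 1 -> 0 <= Delta_ab a b 0.
Proof.
  intros Ha Hb Hab.
  unfold Delta_ab, g_ab, h_ab. rewrite !hyp_at0.
  set (s := a + b). set (p := a * b / s).
  assert (Hs : 0 < s) by (unfold s; lra).
  assert (Hp : 0 < p <= s / 4).
  { unfold p. split. apply Rdiv_lt_0_compat; nra.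
    apply (Rmult_le_reg_r s). lra.
    replace (a*b/s*s) with (a*b) by (field; lra). unfold s.
    pose proof (pow2_ge_0 (a - b)). lra. }
  replace ((a*b)^2) with (p^2 * s^2) by (unfold p; field; lra).
  replace (2 * a * b / s) with (2 * p) by (unfold p; field; lra).
  replace (a * b / s) with p by reflexivity.
  replace ((- (2 * p * 1 + 1)) ^ 2 - 8 * (p ^ 2 * s ^ 2 / (s * (s + 1)) * (1 - 0) * 1 + p * 1) * 1)
    with (1 - 4*p + 4*p^2*(1-s)/(1+s)) by (field; lra).
  assert (0 <= 4*p^2*(1-s)/(1+s)).
  { apply Rmult_le_pos. apply Rmult_le_pos. nra. unfold s; lra. apply Rlt_le, Rinv_0_lt_compat; lra. }
  assert (s <= 1) by (unfold s; lra). lra.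
Qed.

Lemma Delta_nonneg a b x : 0 < a -> 0 < b -> a + b <= 1 -> 0 <= x < 1 -> 0 <= Delta_ab a b x.
Proof.
  intros. destruct (Req_dec x 0) as [E|E].
  - subst. apply Delta0; auto.
  - apply Rlt_le, Delta_pos; auto; lra.
Qed.

Definition uf c x := c - ln (1 - x).
Definition f1 a b c x :=
  (a*b/(a+b) * hyp2F1 a b (a+b+1) x * uf c x - hyp2F1 a b (a+b) x) / ((1 - x) * (uf c x)^2).
Definition Qf a b c x :=
  h_ab a b x * (uf c x)^2 + g_ab a b x * uf c x + 2 * hyp2F1 a b (a+b) x.
Definition f2 a b c x := Qf a b c x / ((uf c x)^3 * (1 - x)^2).

Lemma df a b c x : 0 < a -> 0 < b -> 0 <= x < 1 -> uf c x <> 0 ->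
  is_derive (f_abc a b c) x (f1 a b c x).
Proof.
  intros Ha Hb Hx Hu.
  assert (Hx' : Rabs x < 1) by (rewrite Rabs_pos_eq; lra).
  pose proof (dA a b x Ha Hb Hx') as DA.
  unfold f_abc, f1. unfold uf in *.
  auto_derive.
  - repeat split; try (apply exd_hyp; auto; lra); try lra. exact Hu.
  - replace (Derive (fun x : R => hyp2F1 a b (a + b) x) x) with
      (a * b / (a + b) * hyp2F1 a b (a+b+1) x / (1 - x)) by (symmetry; apply is_derive_unique; exact DA).
    match goal with |- ?x = ?y => change (@eq R x y) end.
    assert (Hu' : c + - ln (1 + - x) <> 0) by exact Hu.
    unfold Rminus. set (L := ln (1 + - x)) in *.
    field. repeat split; lra.
Qed.

Lemma df1 a b c x : 0 < a -> 0 < b -> 0 <= x < 1 -> uf c x <> 0 ->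
  is_derive (f1 a b c) x (f2 a b c x).
Proof.
  intros Ha Hb Hx Hu.
  assert (Hx' : Rabs x < 1) by (rewrite Rabs_pos_eq; lra).
  pose proof (dA a b x Ha Hb Hx') as DA.
  pose proof (dB a b x Ha Hb Hx') as DB.
  unfold f1, f2, Qf, h_ab, g_ab. unfold uf in *.
  auto_derive.
  - assert (Hu' : c + - ln (1 + - x) <> 0) by exact Hu.
    repeat split; try (apply exd_hyp; auto; lra); try lra.
    apply Rmult_integral_contrapositive. split. lra.
    apply Rmult_integral_contrapositive. split. lra.
    apply Rmult_integral_contrapositive. split. lra. lra.
  - replace (Derive (fun x : R => hyp2F1 a b (a + b) x) x) with
      (a * b / (a + b) * hyp2F1 a b (a+b+1) x / (1 - x)) by (symmetry; apply is_derive_unique; exact DA).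
    replace (Derive (fun x : R => hyp2F1 a b (a + b + 1) x) x) with
      (a * b / (a + b + 1) * hyp2F1 (a+1) (b+1) (a+b+2) x) by (symmetry; apply is_derive_unique; exact DB).
    match goal with |- ?x = ?y => change (@eq R x y) end.
    assert (Hu' : c + - ln (1 + - x) <> 0) by exact Hu.
    unfold Rminus. set (L := ln (1 + - x)) in *.
    field. repeat split; lra.
Qed.

Lemma cont_f2 a b c x : 0 < a -> 0 < b -> 0 <= x < 1 -> uf c x <> 0 ->
  continuity_pt (f2 a b c) x.
Proof.
  intros Ha Hb Hx Hu.
  assert (Hx' : Rabs x < 1) by (rewrite Rabs_pos_eq; lra).
  apply (proj2 (continuity_pt_filterlim _ _)).
  apply (@ex_derive_continuous R_AbsRing R_NormedModule (f2 a b c) x).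
  unfold f2, Qf, h_ab, g_ab. unfold uf in *.
  auto_derive.
  assert (Hu' : c + - ln (1 + - x) <> 0) by exact Hu.
  repeat split; try (apply exd_hyp; auto; lra); try lra.
  apply Rmult_integral_contrapositive. split.
  apply Rmult_integral_contrapositive. split. lra.
  apply Rmult_integral_contrapositive. split. lra.
  apply Rmult_integral_contrapositive. split. lra. lra.
  apply Rmult_integral_contrapositive. split. lra. lra.
Qed.


Lemma mvt_f (f g : R -> R) (Hf : forall x, 0 <= x < 1 -> is_derive f x (g x)) x y : 0 <= x -> x < y -> y < 1 -> exists c, x < c < y /\ f y - f x = g c * (y - x).
Proof.
  intros. destruct (MVT_cor2 f g x y H0) as [c [Hc1 Hc2]].
  { intros c Hc. apply is_derive_Reals. apply Hf. lra. }
  exists c. split; auto.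
Qed.

Lemma mvt_g (g k : R -> R) (Hg : forall x, 0 <= x < 1 -> is_derive g x (k x)) x y : 0 <= x -> x < y -> y < 1 -> exists c, x < c < y /\ g y - g x = k c * (y - x).
Proof.
  intros. destruct (MVT_cor2 g k x y H0) as [c [Hc1 Hc2]].
  { intros c Hc. apply is_derive_Reals. apply Hg. lra. }
  exists c. split; auto.
Qed.

Lemma conv_core (f g k : R -> R) (Hf : forall x, 0 <= x < 1 -> is_derive f x (g x)) (Hg : forall x, 0 <= x < 1 -> is_derive g x (k x)) x y t : 0 <= x -> x < y -> y < 1 -> 0 < t < 1 ->
  (forall z, 0 <= z < 1 -> 0 <= k z) ->
  f (t * x + (1 - t) * y) <= t * f x + (1 - t) * f y.
Proof.
  intros Hx Hxy Hy Ht Hk.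
  set (z := t * x + (1 - t) * y).
  assert (Hz : x < z < y) by (unfold z; split; nra).
  destruct (mvt_f f g Hf x z Hx ltac:(lra) ltac:(lra)) as [c1 [Hc1 E1]].
  destruct (mvt_f f g Hf z y ltac:(lra) ltac:(lra) Hy) as [c2 [Hc2 E2]].
  destruct (mvt_g g k Hg c1 c2 ltac:(lra) ltac:(lra) ltac:(lra)) as [c3 [Hc3 E3]].
  assert (Hk3 := Hk c3 ltac:(lra)).
  assert (G : g c1 <= g c2) by nra.
  assert (Ez1 : z - x = (1 - t) * (y - x)) by (unfold z; ring).
  assert (Ez2 : y - z = t * (y - x)) by (unfold z; ring).
  rewrite Ez1 in E1. rewrite Ez2 in E2.
  assert (t * (f z - f x) <= (1 - t) * (f y - f z)).
  { rewrite E1, E2.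
    replace (t * (g c1 * ((1 - t) * (y - x)))) with ((t * (1 - t) * (y - x)) * g c1) by ring.
    replace ((1 - t) * (g c2 * (t * (y - x)))) with ((t * (1 - t) * (y - x)) * g c2) by ring.
    apply Rmult_le_compat_l. assert (0 < t * (1 - t)) by nra. nra. exact G. }
  lra.
Qed.

Lemma convex_of_k (f g k : R -> R) (Hf : forall x, 0 <= x < 1 -> is_derive f x (g x)) (Hg : forall x, 0 <= x < 1 -> is_derive g x (k x)) : (forall z, 0 <= z < 1 -> 0 <= k z) -> convex01 f.
Proof.
  intros Hk x y t Hx Hy Ht.
  destruct (Req_dec t 0) as [E|E].
  { subst. replace (0 * x + (1 - 0) * y) with y by ring. lra. }
  destruct (Req_dec t 1) as [E'|E'].
  { subst. replace (1 * x + (1 - 1) * y) with x by ring. lra. }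
  destruct (Rtotal_order x y) as [H|[H|H]].
  - apply (conv_core f g k Hf Hg); auto; lra.
  - subst. replace (t * y + (1 - t) * y) with y by ring. lra.
  - replace (t * x + (1 - t) * y) with ((1 - t) * y + (1 - (1 - t)) * x) by ring.
    pose proof (conv_core f g k Hf Hg y x (1 - t) ltac:(lra) H ltac:(lra) ltac:(lra) Hk). lra.
Qed.

Lemma k_of_convex (f g k : R -> R) (Hf : forall x, 0 <= x < 1 -> is_derive f x (g x)) (Hg : forall x, 0 <= x < 1 -> is_derive g x (k x)) : (forall z, 0 <= z < 1 -> continuity_pt k z) -> convex01 f ->
  forall z, 0 <= z < 1 -> 0 <= k z.
Proof.
  intros Hc Hconv x0 Hx0.
  destruct (Rle_or_lt 0 (k x0)) as [H|H]; [exact H|exfalso].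
  destruct (Hc x0 Hx0 (- k x0 / 2) ltac:(lra)) as [al [Hal Hcl]].
  set (d := Rmin (al / 2) ((1 - x0) / 2)).
  assert (Hd : 0 < d) by (unfold d; apply Rmin_pos; lra).
  assert (Hd1 : d <= al / 2) by apply Rmin_l.
  assert (Hd2 : d <= (1 - x0) / 2) by apply Rmin_r.
  assert (Kneg : forall z, x0 <= z <= x0 + d -> k z < 0).
  { intros z Hz. destruct (Req_dec z x0) as [E|E]. subst; lra.
    assert (Hcz := Hcl z). simpl in Hcz. unfold R_dist in Hcz.
    assert (Hcz' : Rabs (k z - k x0) < - k x0 / 2).
    { apply Hcz. split. unfold D_x, no_cond. split; auto.
      rewrite Rabs_pos_eq; lra. }
    apply Rabs_lt_between in Hcz'. lra. }
  set (y := x0 + d). set (z := x0 + d / 2).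
  destruct (mvt_f f g Hf x0 z ltac:(lra) ltac:(unfold z; lra) ltac:(unfold z; lra)) as [c1 [Hc1 E1]].
  destruct (mvt_f f g Hf z y ltac:(unfold z; lra) ltac:(unfold z, y; lra) ltac:(unfold y; lra)) as [c2 [Hc2 E2]].
  destruct (mvt_g g k Hg c1 c2 ltac:(lra) ltac:(lra) ltac:(unfold y in *; lra)) as [c3 [Hc3 E3]].
  assert (Hk3 : k c3 < 0) by (apply Kneg; unfold y, z in *; lra).
  assert (G : g c2 < g c1) by nra.
  assert (Hcv := Hconv x0 y (1/2) Hx0 ltac:(unfold y; lra) ltac:(lra)).
  replace (1 / 2 * x0 + (1 - 1 / 2) * y) with z in Hcv by (unfold y, z; field).
  assert (Ez1 : z - x0 = d / 2) by (unfold z; ring).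
  assert (Ez2 : y - z = d / 2) by (unfold y, z; field).
  rewrite Ez1 in E1. rewrite Ez2 in E2.
  assert (f y - f z < f z - f x0).
  { rewrite E1, E2. apply Rmult_lt_compat_r. lra. exact G. }
  lra.
Qed.


Lemma convex_concave (f : R -> R) : concave01 f <-> convex01 (fun x => - f x).
Proof.
  split; intros H x y t Hx Hy Ht; specialize (H x y t Hx Hy Ht); lra.
Qed.

Lemma pt_facts a b x : 0 < a -> 0 < b -> a + b <= 1 -> 0 <= x < 1 ->
  0 < h_ab a b x /\ 1 <= hyp2F1 a b (a+b) x /\ hyp2F1 a b (a+b) x <= - g_ab a b x
  /\ 0 <= Delta_ab a b x.
Proof.
  intros Ha Hb Hab Hx.
  pose proof (hyp_ge1 a b (a+b) x Ha Hb ltac:(lra) Hx).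
  pose proof (hyp_ge1 a b (a+b+1) x Ha Hb ltac:(lra) Hx).
  pose proof (hyp_ge1 (a+1) (b+1) (a+b+2) x ltac:(lra) ltac:(lra) ltac:(lra) Hx).
  assert (Hp : 0 < a * b / (a + b)) by (apply Rdiv_lt_0_compat; nra).
  split; [|split; [|split]].
  - unfold h_ab.
    assert (0 <= (a * b) ^ 2 / ((a + b) * (a + b + 1)) * (1 - x) * hyp2F1 (a + 1) (b + 1) (a + b + 2) x).
    { apply Rmult_le_pos; [apply Rmult_le_pos|]; try lra.
      apply Rlt_le, Rdiv_lt_0_compat. nra. nra. }
    assert (0 < a * b / (a + b) * hyp2F1 a b (a + b + 1) x) by nra.
    lra.
  - auto.
  - unfold g_ab. assert (0 <= 2 * a * b / (a + b) * hyp2F1 a b (a + b + 1) x).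
    { apply Rmult_le_pos; [|lra]. apply Rlt_le, Rdiv_lt_0_compat; nra. }
    lra.
  - apply Delta_nonneg; auto.
Qed.

Lemma quad_fact h g A u : 0 < h -> 0 < A -> A <= - g -> 0 <= g^2 - 8*h*A ->
  let D := g^2 - 8*h*A in
  let wp := (- g + sqrt D) / (2 * h) in
  let wm := (- g - sqrt D) / (2 * h) in
  h * u^2 + g * u + 2 * A = h * (u - wp) * (u - wm) /\
  0 < wm /\ wm <= 4 /\ wm <= - g / (2*h) /\ - g / (2*h) <= wp.
Proof.
  intros Hh HA Hg HD D wp wm.
  assert (Hs := sqrt_sqrt D HD). assert (Hs0 := sqrt_pos D).
  assert (Hlt : sqrt D < - g).
  { apply Rsqr_incrst_0; try lra. unfold Rsqr. rewrite Hs. unfold D. nra. }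
  split; [|split; [|split; [|split]]].
  - unfold wp, wm. field_simplify; [|lra]. 
    replace (sqrt D ^ 2) with D by (simpl; rewrite Rmult_1_r; lra). unfold D. field. lra.
  - unfold wm. apply Rdiv_lt_0_compat; lra.
  - unfold wm.
    assert (E : (- g - sqrt D) * (- g + sqrt D) = 8 * h * A).
    { replace ((- g - sqrt D) * (- g + sqrt D)) with (g^2 - sqrt D * sqrt D) by ring.
      rewrite Hs. unfold D. ring. }
    apply (Rmult_le_reg_r (2 * h * (- g + sqrt D))). nra.
    replace ((- g - sqrt D) / (2 * h) * (2 * h * (- g + sqrt D))) with ((- g - sqrt D) * (- g + sqrt D)) by (field; lra).
    rewrite E. nra.
  - unfold wm. unfold Rdiv. apply Rmult_le_compat_r. apply Rlt_le, Rinv_0_lt_compat; lra. lra.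
  - unfold wp. unfold Rdiv. apply Rmult_le_compat_r. apply Rlt_le, Rinv_0_lt_compat; lra. lra.
Qed.

Lemma ln1x_le0 x : 0 <= x < 1 -> ln (1 - x) <= 0.
Proof. intros. rewrite <- ln_1. apply ln_le; lra. Qed.

Lemma defined_iff c : defined01 c <-> 0 < c.
Proof.
  split.
  - intro H. destruct (Rlt_or_le 0 c) as [Hc|Hc]; auto. exfalso.
    assert (He : exp c <= 1) by (rewrite <- exp_0; destruct Hc as [Hc|Hc]; [left; apply exp_increasing; lra| subst; lra]).
    pose proof (exp_pos c).
    apply (H (1 - exp c)). lra.
    replace (1 - (1 - exp c)) with (exp c) by ring. rewrite ln_exp. ring.
  - intros Hc x Hx. pose proof (ln1x_le0 x Hx). lra.
Qed.

Lemma sup_le F c : Rbar_le (sup01 F) (Finite c) <-> (forall x, 0 <= x < 1 -> F x <= c).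
Proof.
  unfold sup01. destruct (Lub_Rbar_correct (fun y => exists x, 0 <= x < 1 /\ y = F x)) as [Hub Hl].
  split.
  - intros H x Hx. assert (H1 := Hub (F x) (ex_intro _ x (conj Hx eq_refl))).
    apply (Rbar_le_trans _ _ _ H1 H).
  - intros H. apply Hl. intros y [x [Hx ->]]. simpl. apply H; auto.
Qed.

Lemma le_inf F c : Rbar_le (Finite c) (inf01 F) <-> (forall x, 0 <= x < 1 -> c <= F x).
Proof.
  unfold inf01. destruct (Glb_Rbar_correct (fun y => exists x, 0 <= x < 1 /\ y = F x)) as [Hlb Hl].
  split.
  - intros H x Hx. assert (H1 := Hlb (F x) (ex_intro _ x (conj Hx eq_refl))).
    apply (Rbar_le_trans _ _ _ H H1).
  - intros H. apply Hl. intros y [x [Hx ->]]. simpl. apply H; auto.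
Qed.

Lemma pt_quad a b c x : 0 < a -> 0 < b -> a + b <= 1 -> 0 <= x < 1 ->
  Qf a b c x = h_ab a b x * (uf c x - omega_plus a b x) * (uf c x - omega_minus a b x) /\
  0 < omega_minus a b x /\ omega_minus a b x <= 4 /\
  omega_minus a b x <= - g_ab a b x / (2 * h_ab a b x) /\
  - g_ab a b x / (2 * h_ab a b x) <= omega_plus a b x /\ 0 < h_ab a b x.
Proof.
  intros Ha Hb Hab Hx.
  destruct (pt_facts a b x Ha Hb Hab Hx) as [Hh [HA [Hg HD]]].
  destruct (quad_fact (h_ab a b x) (g_ab a b x) (hyp2F1 a b (a+b) x) (uf c x) Hh ltac:(lra) Hg HD)
    as [E [H1 [H2 [H3 H4]]]].
  unfold Qf, omega_plus, omega_minus. unfold Delta_ab. repeat split; auto.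
Qed.

Lemma u_pos c x : 0 < c -> 0 <= x < 1 -> c <= uf c x.
Proof. intros. unfold uf. pose proof (ln1x_le0 x H0). lra. Qed.

Lemma f2_sign a b c x : 0 < c -> 0 <= x < 1 ->
  (0 <= f2 a b c x <-> 0 <= Qf a b c x) /\ (f2 a b c x <= 0 <-> Qf a b c x <= 0).
Proof.
  intros Hc Hx. pose proof (u_pos c x Hc Hx).
  assert (Hd : 0 < uf c x ^ 3 * (1 - x) ^ 2).
  { apply Rmult_lt_0_compat; apply pow_lt; lra. }
  unfold f2. split; split; intro H1.
  - assert (E : Qf a b c x = Qf a b c x / (uf c x ^ 3 * (1 - x) ^ 2) * (uf c x ^ 3 * (1 - x) ^ 2)) by (field; lra).
    rewrite E. apply Rmult_le_pos; lra.
  - apply Rmult_le_pos; [lra|]. apply Rlt_le, Rinv_0_lt_compat; lra.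
  - assert (E : Qf a b c x = Qf a b c x / (uf c x ^ 3 * (1 - x) ^ 2) * (uf c x ^ 3 * (1 - x) ^ 2)) by (field; lra).
    rewrite E. apply Rmult_le_0_r; lra.
  - unfold Rdiv. apply Rmult_le_0_r; [lra|]. apply Rlt_le, Rinv_0_lt_compat; lra.
Qed.

Lemma derivs a b c : 0 < a -> 0 < b -> 0 < c ->
  (forall x, 0 <= x < 1 -> is_derive (f_abc a b c) x (f1 a b c x)) /\
  (forall x, 0 <= x < 1 -> is_derive (f1 a b c) x (f2 a b c x)).
Proof.
  intros Ha Hb Hc. split; intros x Hx; pose proof (u_pos c x Hc Hx).
  - apply df; auto; lra.
  - apply df1; auto; lra.
Qed.

Lemma convex_iff_Q a b c : 0 < a -> 0 < b -> 0 < c ->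
  convex01 (f_abc a b c) <-> (forall x, 0 <= x < 1 -> 0 <= Qf a b c x).
Proof.
  intros Ha Hb Hc. destruct (derivs a b c Ha Hb Hc) as [D1 D2].
  split.
  - intros Hconv x Hx. apply (proj1 (f2_sign a b c x Hc Hx)).
    apply (k_of_convex _ _ _ D1 D2); auto.
    intros z Hz. apply cont_f2; auto. pose proof (u_pos c z Hc Hz). lra.
  - intros HQ. apply (convex_of_k _ _ _ D1 D2). intros z Hz.
    apply (proj1 (f2_sign a b c z Hc Hz)). auto.
Qed.

Lemma concave_iff_Q a b c : 0 < a -> 0 < b -> 0 < c ->
  concave01 (f_abc a b c) <-> (forall x, 0 <= x < 1 -> Qf a b c x <= 0).
Proof.
  intros Ha Hb Hc. destruct (derivs a b c Ha Hb Hc) as [D1 D2].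
  assert (D1' : forall x, 0 <= x < 1 -> is_derive (fun y => - f_abc a b c y) x (- f1 a b c x)).
  { intros x Hx. apply (@is_derive_opp R_AbsRing R_NormedModule). auto. }
  assert (D2' : forall x, 0 <= x < 1 -> is_derive (fun y => - f1 a b c y) x (- f2 a b c x)).
  { intros x Hx. apply (@is_derive_opp R_AbsRing R_NormedModule). auto. }
  rewrite convex_concave.
  split.
  - intros Hconv x Hx. apply (proj2 (f2_sign a b c x Hc Hx)).
    assert (0 <= - f2 a b c x); [|lra].
    apply (k_of_convex _ _ (fun y => - f2 a b c y) D1' D2'); auto.
    intros z Hz. apply continuity_pt_opp. apply cont_f2; auto. pose proof (u_pos c z Hc Hz). lra.
  - intros HQ. apply (convex_of_k _ _ (fun y => - f2 a b c y) D1' D2'). intros z Hz.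
    assert (f2 a b c z <= 0); [|lra].
    apply (proj2 (f2_sign a b c z Hc Hz)). auto.
Qed.

Definition psi a b c x := uf c x + g_ab a b x / (2 * h_ab a b x).

Lemma cont_psi a b c x : 0 < a -> 0 < b -> a + b <= 1 -> 0 <= x < 1 -> continuity_pt (psi a b c) x.
Proof.
  intros Ha Hb Hab Hx.
  assert (Hx' : Rabs x < 1) by (rewrite Rabs_pos_eq; lra).
  destruct (pt_facts a b x Ha Hb Hab Hx) as [Hh _].
  apply (proj2 (continuity_pt_filterlim _ _)).
  apply (@ex_derive_continuous R_AbsRing R_NormedModule (psi a b c) x).
  unfold psi, uf, g_ab. unfold h_ab in Hh |- *.
  auto_derive.
  repeat split; try (apply exd_hyp; auto; lra); try lra.
Qed.

Lemma phi_plus_u a b c x : uf c x - omega_plus a b x = c - phi_plus a b x.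
Proof. unfold uf, phi_plus. ring. Qed.
Lemma phi_minus_u a b c x : uf c x - omega_minus a b x = c - phi_minus a b x.
Proof. unfold uf, phi_minus. ring. Qed.

Lemma phi0_plus a b : phi_plus a b 0 = omega_plus a b 0.
Proof. unfold phi_plus. rewrite Rminus_0_r, ln_1. ring. Qed.
Lemma phi0_minus a b : phi_minus a b 0 = omega_minus a b 0.
Proof. unfold phi_minus. rewrite Rminus_0_r, ln_1. ring. Qed.

Lemma convex_part a b c : 0 < a -> 0 < b -> a + b <= 1 ->
  (defined01 c /\ convex01 (f_abc a b c)) <-> Rbar_le (alpha0 a b) (Finite c).
Proof.
  intros Ha Hb Hab. unfold alpha0. rewrite sup_le. split.
  - intros [Hdef Hconv]. apply defined_iff in Hdef. rename Hdef into Hc.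
    pose proof (proj1 (convex_iff_Q a b c Ha Hb Hc) Hconv) as HQ.
    intros x0 Hx0.
    destruct (Rle_or_lt (phi_plus a b x0) c) as [H|H]; [exact H|exfalso].
    assert (P0 : psi a b c x0 <= 0).
    { destruct (pt_quad a b c x0 Ha Hb Hab Hx0) as [E [_ [_ [H3 [H4 Hh]]]]].
      pose proof (HQ x0 Hx0) as Q0. rewrite E, phi_plus_u in Q0.
      assert (uf c x0 - omega_minus a b x0 <= 0).
      { destruct (Rle_or_lt (uf c x0 - omega_minus a b x0) 0) as [K|K]; auto.
        exfalso. assert (0 < h_ab a b x0 * (c - phi_plus a b x0) * (uf c x0 - omega_minus a b x0) * -1).
        { replace (h_ab a b x0 * (c - phi_plus a b x0) * (uf c x0 - omega_minus a b x0) * -1)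
            with (h_ab a b x0 * ((phi_plus a b x0 - c) * (uf c x0 - omega_minus a b x0))) by ring.
          apply Rmult_lt_0_compat; auto. apply Rmult_lt_0_compat; lra. }
        lra. }
      unfold psi. unfold Rdiv in *. lra. }
    set (e := exp (- Rabs c - 5)).
    assert (He : 0 < e < 1).
    { split. apply exp_pos. unfold e. rewrite <- exp_0. apply exp_increasing.
      pose proof (Rabs_pos c). lra. }
    set (x1 := 1 - e * (1 - x0)).
    assert (Hx1 : x0 < x1 < 1) by (unfold x1; split; nra).
    assert (Hl1 : ln (1 - x1) <= - Rabs c - 5).
    { unfold x1. replace (1 - (1 - e * (1 - x0))) with (e * (1 - x0)) by ring.
      rewrite ln_mult by lra. unfold e. rewrite ln_exp.
      pose proof (ln1x_le0 x0 Hx0). lra. }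
    assert (P1 : 0 <= psi a b c x1).
    { assert (Hx1' : 0 <= x1 < 1) by lra.
      destruct (pt_quad a b c x1 Ha Hb Hab Hx1') as [E [_ [H2 [H3 [H4 Hh]]]]].
      pose proof (HQ x1 Hx1') as Q1. rewrite E in Q1.
      assert (Hu : 5 <= uf c x1) by (unfold uf; pose proof (Rle_abs (-c)); rewrite Rabs_Ropp in *; lra).
      assert (uf c x1 - omega_plus a b x1 >= 0).
      { destruct (Rle_or_lt 0 (uf c x1 - omega_plus a b x1)) as [K|K]; [lra|].
        exfalso. assert (0 < h_ab a b x1 * (omega_plus a b x1 - uf c x1) * (uf c x1 - omega_minus a b x1)).
        { apply Rmult_lt_0_compat. apply Rmult_lt_0_compat; lra. lra. }
        assert (h_ab a b x1 * (omega_plus a b x1 - uf c x1) * (uf c x1 - omega_minus a b x1)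
          = - (h_ab a b x1 * (uf c x1 - omega_plus a b x1) * (uf c x1 - omega_minus a b x1))) by ring.
        lra. }
      unfold psi. unfold Rdiv in *. lra. }
    assert (Hz : exists z, x0 <= z <= x1 /\ psi a b c z = 0).
    { destruct (Req_dec (psi a b c x0) 0) as [E0|E0]. exists x0. split; [lra|auto].
      destruct (Req_dec (psi a b c x1) 0) as [E1|E1]. exists x1. split; [lra|auto].
      destruct (Ranalysis5.IVT_interv (psi a b c) x0 x1) as [z [Hz1 Hz2]].
      - intros y Hy. apply cont_psi; auto; lra.
      - lra.
      - lra.
      - lra.
      - exists z. auto. }
    destruct Hz as [z [Hz1 Hz2]].
    assert (Hz' : 0 <= z < 1) by lra.
    destruct (pt_facts a b z Ha Hb Hab Hz') as [Hh [HA [Hg HD]]].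
    pose proof (HQ z Hz') as Qz.
    assert (Eu : uf c z = - g_ab a b z / (2 * h_ab a b z)).
    { unfold psi in Hz2. unfold Rdiv in *. lra. }
    assert (EQ : Qf a b c z = - Delta_ab a b z / (4 * h_ab a b z)).
    { unfold Qf. rewrite Eu. unfold Delta_ab. field. lra. }
    assert (HD0 : Delta_ab a b z = 0).
    { rewrite EQ in Qz. unfold Rdiv in Qz.
      assert (0 < / (4 * h_ab a b z)) by (apply Rinv_0_lt_compat; lra).
      nra. }
    destruct (Req_dec z 0) as [Ez|Ez].
    + subst z. assert (x0 = 0) by lra. subst x0.
      rewrite phi0_plus in H. unfold omega_plus in H. rewrite HD0, sqrt_0 in H.
      unfold uf in Eu. rewrite Rminus_0_r, ln_1 in Eu.
      replace ((- g_ab a b 0 + 0) / (2 * h_ab a b 0)) with (- g_ab a b 0 / (2 * h_ab a b 0)) in H by (field; lra).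
      lra.
    + pose proof (Delta_pos a b z Ha Hb Hab ltac:(lra)). lra.
  - intros H.
    destruct (pt_quad a b c 0 Ha Hb Hab ltac:(lra)) as [_ [H1 [_ [H3 [H4 _]]]]].
    pose proof (H 0 ltac:(lra)) as H0. rewrite phi0_plus in H0.
    assert (Hc : 0 < c) by lra.
    split. apply defined_iff; auto.
    apply (convex_iff_Q a b c Ha Hb Hc). intros x Hx.
    destruct (pt_quad a b c x Ha Hb Hab Hx) as [E [_ [_ [H3' [H4' Hh]]]]].
    rewrite E. pose proof (H x Hx). rewrite phi_plus_u.
    apply Rmult_le_pos. apply Rmult_le_pos; lra.
    pose proof (phi_plus_u a b c x). lra.
Qed.

Lemma concave_part a b c : 0 < a -> 0 < b -> a + b <= 1 ->
  (defined01 c /\ concave01 (f_abc a b c)) <->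
     (Rbar_le (delta_minus a b) (Finite c) /\ Rbar_le (Finite c) (delta_plus a b)).
Proof.
  intros Ha Hb Hab. unfold delta_minus, delta_plus. rewrite sup_le, le_inf. split.
  - intros [Hdef Hconc]. apply defined_iff in Hdef. rename Hdef into Hc.
    pose proof (proj1 (concave_iff_Q a b c Ha Hb Hc) Hconc) as HQ.
    assert (K : forall x, 0 <= x < 1 -> phi_minus a b x <= c /\ c <= phi_plus a b x).
    { intros x Hx.
      destruct (pt_quad a b c x Ha Hb Hab Hx) as [E [_ [_ [H3 [H4 Hh]]]]].
      pose proof (HQ x Hx) as Q. rewrite E in Q.
      pose proof (phi_plus_u a b c x). pose proof (phi_minus_u a b c x).
      split.
      - destruct (Rle_or_lt 0 (uf c x - omega_minus a b x)) as [K|K]; [lra|exfalso].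
        assert (0 < h_ab a b x * (omega_plus a b x - uf c x) * (omega_minus a b x - uf c x)).
        { apply Rmult_lt_0_compat. apply Rmult_lt_0_compat; lra. lra. }
        assert (h_ab a b x * (omega_plus a b x - uf c x) * (omega_minus a b x - uf c x)
          = h_ab a b x * (uf c x - omega_plus a b x) * (uf c x - omega_minus a b x)) by ring.
        lra.
      - destruct (Rle_or_lt (uf c x - omega_plus a b x) 0) as [K|K]; [lra|exfalso].
        assert (0 < h_ab a b x * (uf c x - omega_plus a b x) * (uf c x - omega_minus a b x)).
        { apply Rmult_lt_0_compat. apply Rmult_lt_0_compat; lra. lra. }
        lra. }
    split; intros x Hx; apply K; auto.
  - intros [H1 H2].
    destruct (pt_quad a b c 0 Ha Hb Hab ltac:(lra)) as [_ [P1 _]].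
    pose proof (H1 0 ltac:(lra)) as H0. rewrite phi0_minus in H0.
    assert (Hc : 0 < c) by lra.
    split. apply defined_iff; auto.
    apply (concave_iff_Q a b c Ha Hb Hc). intros x Hx.
    destruct (pt_quad a b c x Ha Hb Hab Hx) as [E [_ [_ [H3 [H4 Hh]]]]].
    rewrite E. pose proof (H1 x Hx). pose proof (H2 x Hx).
    rewrite phi_plus_u.
    assert (0 <= uf c x - omega_minus a b x) by (rewrite phi_minus_u; lra).
    assert (c - phi_plus a b x <= 0) by lra.
    assert (0 <= h_ab a b x * (phi_plus a b x - c) * (uf c x - omega_minus a b x)).
    { apply Rmult_le_pos. apply Rmult_le_pos; lra. lra. }
    replace (h_ab a b x * (c - phi_plus a b x) * (uf c x - omega_minus a b x))
      with (- (h_ab a b x * (phi_plus a b x - c) * (uf c x - omega_minus a b x))) by ring.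
    lra.
Qed.

Theorem theorem2 (a b c : R) (ha : 0 < a) (hb : 0 < b) (hab : a + b <= 1) :
  ((defined01 c /\ convex01 (f_abc a b c)) <-> Rbar_le (alpha0 a b) (Finite c)) /\
  ((defined01 c /\ concave01 (f_abc a b c)) <->
     (Rbar_le (delta_minus a b) (Finite c) /\ Rbar_le (Finite c) (delta_plus a b))).
Proof.
  split. apply convex_part; auto. apply concave_part; auto.
Qed.
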